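(* Given a closure operator $k$ on $\mathcal{L}$ such that $\mathcal{L}(p(x)) \subseteq k^*(\mathcal{L})$ for all $x$, if $k_p(\ell) \neq k_p(\jmath)$ then $k(\ell) \neq k(\jmath)$.
   Context: $\mathcal{L}$ is a security lattice (ordered by $\sqsubseteq$, with joins $\sqcup$) that also has greatest lower bounds (meets). Programs $p$ are partial functions from $\mathcal{P}(I \times \mathcal{L})$ to $\mathcal{P}(O \times \mathcal{L})$; $\mathcal{L}(x) = \{\ell \mid a^\ell \in x\}$ is the set of labels in $x$. A closure operator $k : \mathcal{L} \to \mathcal{L}$ is extensive ($\ell \sqsubseteq k(\ell)$), monotone, and idempotent; $k^*(S) = \{k(s) \mid s \in S\}$. $k_p(\ell)$ is the greatest lower bound (meet) of $\{\jmath \mid \exists x.\ \jmath \in \mathcal{L}(p(x)) \wedge \ell \sqsubseteq \jmath\}$. *)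

(* Defs.v *)
From HB Require Import structures.
From mathcomp Require Import all_boot all_order.
Set Implicit Arguments. Unset Strict Implicit. Unset Printing Implicit Defensive.
Import Order.TTheory.
Local Open Scope order_scope.

(* Sets are predicates; a labelled datum a^l is a pair (a, l). *)

Definition labels (A : Type) (L : Type) (x : A * L -> Prop) : L -> Prop :=
  fun l => exists a, x (a, l).

Definition is_glb d (L : porderType d) (S : L -> Prop) (g : L) : Prop :=
  (forall s, S s -> g <= s) /\ (forall m, (forall s, S s -> m <= s) -> m <= g).

Definition closure_op d (L : porderType d) (k : L -> L) : Prop :=
  (forall l, l <= k l) /\ (forall l j, l <= j -> k l <= k j) /\
  (forall l, k (k l) = k l).

Definition program (I O L : Type) := (I * L -> Prop) -> option (O * L -> Prop).

Definition kp d (L : porderType d) (glb : (L -> Prop) -> L) (I O : Type)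
  (p : program I O L) (l : L) : L :=
  glb (fun j => exists x y, p x = Some y /\ labels y j /\ l <= j).

(* Main.v *)
Require Import Defs.
From HB Require Import structures.
From mathcomp Require Import all_boot all_order.
Import Order.TTheory.
Local Open Scope order_scope.

Theorem mainTheorem18 (d : Order.disp_t) (L : latticeType d) (glb : (L -> Prop) -> L)
  (Hglb : forall S : L -> Prop, is_glb S (glb S))
  (I O : Type) (p : program I O L) (k : L -> L)
  (Hk : closure_op k)
  (Hrange : forall x y, p x = Some y ->
     forall j, labels y j -> exists s : L, j = k s)
  (l j : L) :
  kp glb p l <> kp glb p j -> k l <> k j.
Proof.
  have [Hext [Hmono Hidem]] := Hk.
  have E : forall m, kp glb p m = kp glb p (k m).
    move=> m; rewrite /kp.
    set S1 := (fun j0 => _); set S2 := (fun j0 => _).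
    have H12 : forall s, S1 s -> S2 s.
      move=> s [x [y [Hp [Hl Hle]]]]; exists x, y; split=> //; split=> //.
      have [t Ht] := Hrange x y Hp s Hl.
      by rewrite Ht -(Hidem t); apply: Hmono; rewrite -Ht.
    have H21 : forall s, S2 s -> S1 s.
      move=> s [x [y [Hp [Hl Hle]]]]; exists x, y; split=> //; split=> //.
      exact: le_trans (Hext m) Hle.
    have [G1a G1b] := Hglb S1; have [G2a G2b] := Hglb S2.
    apply/eqP; rewrite eq_le; apply/andP; split.
    - apply: G2b => s Hs; apply: G1a; exact: H21.
    - apply: G1b => s Hs; apply: G2a; exact: H12.
  by move=> Hne Heq; apply: Hne; rewrite E Heq -E.
Qed.
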